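(* Let $\Gamma$ be a connected countably infinite graph, let $(B_n)_{n\in\mathbb N}$ satisfy $(\dagger)$, and let $M_1,M_2$ be maximum matchings. Then every component of the symmetric difference $M_1\oplus M_2$ is alternating with respect to $M_1$ and $M_2$, and is either a cycle of even length, a double ray, or a path of even length whose two end-vertices $u,v$ both lie in $B_n\setminus B_{n-1}$ for the same $n$ (with $B_0:=\emptyset$).
   Context: Condition $(\dagger)$ on $(B_n)_{n\in\mathbb N}$: each $B_n\subseteq V(\Gamma)$ is finite, $B_n\subseteq B_{n+1}$, $\bigcup_n B_n=V(\Gamma)$, and the subgraph induced on each $B_n$ is connected. A matching $M$ misses a vertex $x$ if no edge of $M$ contains $x$. The miss sequence of $M$ is $(m_n)_{n\in\mathbb N}$ with $m_n$ the number of vertices of $B_n$ missed by $M$. For matchings $M_1,M_2$ with miss sequences $(a_n),(b_n)$, write $M_1<M_2$ if there is $N$ with $a_n=b_n$ for all $n<N$ and $a_N>b_N$. A maximum matching is a matching $M$ for which no matching $M'$ satisfies $M<M'$. A path, cycle or double ray is alternating with respect to $M$ if every other edge of it lies in $M$. $S\oplus T=(S\cup T)\setminus(S\cap T)$. *)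

(* Defs.v *)
From Stdlib Require Import ZArith Relation_Operators ClassicalEpsilon.
From mathcomp Require Import all_boot.

Set Implicit Arguments. Unset Strict Implicit. Unset Printing Implicit Defensive.

(* A (simple, undirected) graph on a vertex type V is a symmetric irreflexive
   relation adj.  Edge sets (matchings, symmetric differences) are symmetric
   relations on V. *)

Section Defs.
Variable V : countType.

Definition simple_graph (adj : V -> V -> Prop) : Prop :=
  (forall x y, adj x y -> adj y x) /\ (forall x, ~ adj x x).

(* countably infinite: V is a countType and nat injects into V *)
Definition countably_infinite : Prop :=
  exists f : nat -> V, injective f.

Definition connected_graph (adj : V -> V -> Prop) : Prop :=
  forall x y, clos_refl_trans V adj x y.

Definition induced_connected (adj : V -> V -> Prop) (s : seq V) : Prop :=
  forall x y, x \in s -> y \in s ->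
    clos_refl_trans V (fun a b => adj a b /\ a \in s /\ b \in s) x y.

(* Condition (dagger).  B k is the paper's B_{k+1} (the paper indexes from 1,
   with B_0 := empty); finiteness is built in since each B k is a list. *)
Definition dagger (adj : V -> V -> Prop) (B : nat -> seq V) : Prop :=
  (forall n, {subset B n <= B n.+1}) /\
  (forall x, exists n, x \in B n) /\
  (forall n, induced_connected adj (B n)).

(* x lies in the paper's B_{n+1} \ B_n  (with B_0 = empty) *)
Definition in_layer (B : nat -> seq V) (n : nat) (x : V) : Prop :=
  x \in B n /\ (forall k, n = k.+1 -> x \notin B k).

Definition matching (adj : V -> V -> Prop) (M : V -> V -> Prop) : Prop :=
  (forall x y, M x y -> M y x) /\
  (forall x y, M x y -> adj x y) /\
  (forall x y z, M x y -> M x z -> y = z).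

Definition misses (M : V -> V -> Prop) (x : V) : Prop := ~ exists y, M x y.

Definition decb (P : Prop) : bool :=
  if excluded_middle_informative P then true else false.

Definition miss (M : V -> V -> Prop) (B : nat -> seq V) (n : nat) : nat :=
  count (fun x => decb (misses M x)) (undup (B n)).

Definition lt_match (B : nat -> seq V) (M1 M2 : V -> V -> Prop) : Prop :=
  exists N, (forall n, n < N -> miss M1 B n = miss M2 B n) /\
            miss M2 B N < miss M1 B N.

Definition maximum_matching adj B (M : V -> V -> Prop) : Prop :=
  matching adj M /\ forall M', matching adj M' -> ~ lt_match B M M'.

Definition symdiff (M1 M2 : V -> V -> Prop) (x y : V) : Prop :=
  (M1 x y /\ ~ M2 x y) \/ (M2 x y /\ ~ M1 x y).

(* The component of the edge-subgraph D containing the vertex x0 (which is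
   assumed to be incident to an edge of D): its vertex set is C, its edge set
   is the set of D-edges with an endpoint (equivalently both) in C. *)

Definition alt_even_cycle (M1 M2 D : V -> V -> Prop) (C : V -> Prop) : Prop :=
  exists (s : seq V) (x0 : V),
    let n := size s in
    let v i := nth x0 s i in
    let e i := (v i, v (i.+1 %% n)) in
    uniq s /\ 4 <= n /\ ~~ odd n /\
        (forall y, C y <-> y \in s) /\
        (forall a b, C a -> (D a b <->
           (exists2 i, i < n & ((a, b) = e i \/ (b, a) = e i)))) /\
        exists bo : bool, forall i, i < n ->
          (M1 (e i).1 (e i).2 <-> odd i = bo) /\
          (M2 (e i).1 (e i).2 <-> odd i = ~~ bo).

Definition alt_double_ray (M1 M2 D : V -> V -> Prop) (C : V -> Prop) : Prop :=
  exists f : Z -> V,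
    injective f /\
        (forall y, C y <-> exists i, f i = y) /\
        (forall a b, C a -> (D a b <->
           exists i, (a = f i /\ b = f (Z.succ i)) \/ (b = f i /\ a = f (Z.succ i)))) /\
        exists bo : bool, forall i,
          (M1 (f i) (f (Z.succ i)) <-> Z.odd i = bo) /\
          (M2 (f i) (f (Z.succ i)) <-> Z.odd i = ~~ bo).

Definition alt_even_path (B : nat -> seq V) (M1 M2 D : V -> V -> Prop)
    (C : V -> Prop) : Prop :=
  exists (s : seq V) (x0 : V),
    let n := size s in
    let v i := nth x0 s i in
    uniq s /\ odd n /\
        (forall y, C y <-> y \in s) /\
        (forall a b, C a -> (D a b <->
           (exists2 i, i.+1 < n & ((a = v i /\ b = v i.+1) \/ (b = v i /\ a = v i.+1))))) /\
        (exists bo : bool, forall i, i.+1 < n ->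
          (M1 (v i) (v i.+1) <-> odd i = bo) /\
          (M2 (v i) (v i.+1) <-> odd i = ~~ bo)) /\
        exists k, in_layer B k (v 0) /\ in_layer B k (v n.-1).

End Defs.

(* Main.v *)
Require Import Defs.
From Stdlib Require Import ZArith Relation_Operators Operators_Properties Lia ClassicalEpsilon.
From mathcomp Require Import all_boot zify.

Set Implicit Arguments. Unset Strict Implicit. Unset Printing Implicit Defensive.

Lemma decbE (P : Prop) : decb P <-> P.
Proof. rewrite /decb; case: excluded_middle_informative => //. Qed.

Lemma count_le_in (T : eqType) (s : seq T) (p q : pred T) :
  (forall x, x \in s -> p x -> q x) -> count p s <= count q s.
Proof.
elim: s => //= a s IH H.
have H' : forall x, x \in s -> p x -> q x by move=> x xs; apply: H; rewrite inE xs orbT.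
have := IH H'; case pa: (p a); case qa: (q a) => //=; try lia.
by rewrite H ?inE ?eqxx in qa.
Qed.

Lemma count_lt_in (T : eqType) (s : seq T) (p q : pred T) u :
  (forall x, x \in s -> p x -> q x) -> u \in s -> ~~ p u -> q u ->
  count p s < count q s.
Proof.
elim: s => //= a s IH H; rewrite inE => /orP[/eqP <-|us] pu qu.
  rewrite (negbTE pu) qu add0n add1n ltnS.
  by apply: count_le_in => x xs; apply: H; rewrite inE xs orbT.
have H' : forall x, x \in s -> p x -> q x by move=> x xs; apply: H; rewrite inE xs orbT.
have := IH H' us pu qu; case pa: (p a); case qa: (q a) => //=; try lia.
by rewrite H ?inE ?eqxx in qa.
Qed.

Section Swap.
Variable V : countType.
Variables (adj : V -> V -> Prop) (B : nat -> seq V).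
Hypothesis Hdag : dagger adj B.

Lemma B_mono n m : n <= m -> {subset B n <= B m}.
Proof.
elim: m => [|m IH]; first by rewrite leqn0 => /eqP ->.
rewrite leq_eqVlt => /orP[/eqP -> //|]; rewrite ltnS => /IH H x /H.
exact: Hdag.1.
Qed.

Definition swapM (C : V -> Prop) (Ma Mb : V -> V -> Prop) x y :=
  (C x /\ Mb x y) \/ (~ C x /\ Ma x y).

Lemma swap_matching (C : V -> Prop) Ma Mb :
  matching adj Ma -> matching adj Mb ->
  (forall x y, C x -> Ma x y -> C y) -> (forall x y, C x -> Mb x y -> C y) ->
  matching adj (swapM C Ma Mb).
Proof.
move=> [sa [aa fa]] [sb [ab fb]] ca cb; split; last split.
- move=> x y [[cx m]|[cx m]].
  + by left; split; [apply: (cb x y cx m)|apply: sb].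
  + right; split; last by apply: sa.
    by move=> cy; apply: cx; apply: (ca y x cy); apply: sa.
- by move=> x y [[_ m]|[_ m]]; auto.
- move=> x y z [[cx m]|[cx m]] [[cx' m']|[cx' m']]; try tauto; eauto.
Qed.

Lemma swap_misses (C : V -> Prop) Ma Mb x :
  misses (swapM C Ma Mb) x <-> (C x /\ misses Mb x) \/ (~ C x /\ misses Ma x).
Proof.
rewrite /misses /swapM; split.
- move=> H; case: (classic (C x)) => cx; [left|right]; split=> // -[y m]; apply: H; exists y; tauto.
- move=> [[cx H]|[cx H]] [y [[? m]|[? m]]]; try tauto; apply: H; eauto.
Qed.

Lemma improve1 (C : V -> Prop) Ma Mb u :
  maximum_matching adj B Ma -> matching adj Mb ->
  (forall x y, C x -> Ma x y -> C y) -> (forall x y, C x -> Mb x y -> C y) ->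
  (forall x, C x -> ~ misses Mb x) -> C u -> misses Ma u -> False.
Proof.
move=> [ma mx] mb ca cb cov cu mu.
have sm := swap_matching ma mb ca cb.
apply: (mx _ sm).
have le : forall n, miss (swapM C Ma Mb) B n <= miss Ma B n.
  move=> n; apply: count_le_in => x _ /decbE /swap_misses H; apply/decbE.
  case: H => -[cx H] //; by case: (cov x cx).
have [n0 un0] := Hdag.2.1 u.
have ex : exists n, miss (swapM C Ma Mb) B n < miss Ma B n.
  exists n0; apply: (count_lt_in (u:=u)).
  - move=> x _ /decbE /swap_misses H; apply/decbE.
    case: H => -[cx H] //; by case: (cov x cx).
  - by rewrite mem_undup.
  - by apply/negP => /decbE /swap_misses [[_ /cov]|[]].
  - exact/decbE.
case: (ex_minnP ex) => N HN Hmin.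
exists N; split => // n nN.
have h1 := le n.
have h2 : ~~ (miss (swapM C Ma Mb) B n < miss Ma B n) by apply/negP => H; have := Hmin _ H; lia.
lia.
Qed.

Lemma improve2 (C : V -> Prop) Ma Mb u w n0 :
  maximum_matching adj B Ma -> matching adj Mb ->
  (forall x y, C x -> Ma x y -> C y) -> (forall x y, C x -> Mb x y -> C y) ->
  (forall x, C x -> x <> u -> x <> w -> ~ misses Ma x /\ ~ misses Mb x) ->
  C u -> misses Ma u -> ~ misses Mb u -> u \in B n0 -> w \notin B n0 -> False.
Proof.
move=> [ma mx] mb ca cb cov cu mu nmu un0 wn0.
have sm := swap_matching ma mb ca cb.
apply: (mx _ sm).
have ex : exists n, u \in B n by exists n0.
case: (ex_minnP ex) => N uN Hmin.
have wN : w \notin B N by apply/negP => /(B_mono (Hmin _ un0)); apply/negP.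
exists N; split.
- move=> n nN; apply: eq_in_count => x; rewrite mem_undup => xn.
  have xu : x <> u by move=> e; subst x; have := Hmin _ xn; lia.
  have xw : x <> w by move=> e; subst x; move: wN; rewrite (B_mono (ltnW nN) xn).
  apply/idP/idP => /decbE H; apply/decbE; move: H.
  + move=> H; apply/swap_misses; case: (classic (C x)) => cx; last by right.
    by case: (cov x cx xu xw).
  + move=> /swap_misses [[cx H]|[_ H]] //; by case: (cov x cx xu xw).
- apply: (count_lt_in (u:=u)).
  + move=> x; rewrite mem_undup => xN /decbE /swap_misses H; apply/decbE.
    case: H => -[cx H] //.
    case: (classic (x = u)) => [->//|xu].
    have xw : x <> w by move=> e; subst x; move: wN; rewrite xN.
    by case: (cov x cx xu xw).
  + by rewrite mem_undup.
  + by apply/negP => /decbE /swap_misses [[_ /nmu]|[]].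
  + exact/decbE.
Qed.
End Swap.



Lemma Zeven_nat n : Z.even (Z.of_nat n) = ~~ odd n.
Proof.
elim: n => [//|n IH]; rewrite Nat2Z.inj_succ Z.even_succ -Z.negb_even IH /=.
by case: (odd n).
Qed.
Lemma par_eq a b : Z.even a = Z.even b -> exists q, (a - b = 2 * q)%Z.
Proof. move=> h; apply/Z.even_spec; rewrite Z.even_sub h; by case: (Z.even b). Qed.
Lemma par_neq a b : Z.even a <> Z.even b -> exists q, (a - b = 2 * q + 1)%Z.
Proof. move=> h; apply/Z.odd_spec; rewrite -Z.negb_even Z.even_sub; by case: (Z.even a) (Z.even b) h => -[]. Qed.
Lemma eq_par a b q : (a - b = 2 * q)%Z -> Z.even a = Z.even b.
Proof.
move=> h; have : Z.even (a - b) by apply/Z.even_spec; exists q.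
by rewrite Z.even_sub; case: (Z.even a) (Z.even b) => -[].
Qed.
Lemma neq_par a b q : (a - b = 2 * q + 1)%Z -> Z.even a <> Z.even b.
Proof.
move=> h; have : Z.odd (a - b) by apply/Z.odd_spec; exists q.
by rewrite -Z.negb_even Z.even_sub; case: (Z.even a) (Z.even b) => -[].
Qed.
Lemma nat_par n : exists q, n = 2 * q + odd n.
Proof. exists n./2; have := odd_double_half n; rewrite -muln2; lia. Qed.

Section Walk.
Variable V : countType.
Variables (adj : V -> V -> Prop) (M1 M2 : V -> V -> Prop).
Hypothesis Hsg : simple_graph adj.
Hypothesis HM1 : matching adj M1.
Hypothesis HM2 : matching adj M2.
Variable x0 : V.

Local Notation D := (symdiff M1 M2).

Definition Pm (Ma Mb : V -> V -> Prop) (c : V) : option V :=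
  match excluded_middle_informative (exists y, Ma c y /\ ~ Mb c y) with
  | left h => Some (proj1_sig (constructive_indefinite_description _ h))
  | right _ => None end.

Lemma Pm_some Ma Mb c y : matching adj Ma ->
  (Pm Ma Mb c = Some y <-> Ma c y /\ ~ Mb c y).
Proof.
move=> [_ [_ fa]]; rewrite /Pm; case: excluded_middle_informative => [h|h].
- case: (constructive_indefinite_description _ h) => z /= hz; split.
  + by case=> <-.
  + by case=> m _; congr Some; apply: fa (proj1 hz) m.
- split=> // hy; case: h; by exists y.
Qed.

Lemma Pm_none Ma Mb c : Pm Ma Mb c = None <-> ~ exists y, Ma c y /\ ~ Mb c y.
Proof. by rewrite /Pm; case: excluded_middle_informative. Qed.

Definition Mt (i : Z) := if Z.even i then M1 else M2.
Definition Mo (i : Z) := if Z.even i then M2 else M1.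
Definition Q (i : Z) := Pm (Mt i) (Mo i).

Lemma Mt_match i : matching adj (Mt i).
Proof. by rewrite /Mt; case: (Z.even i). Qed.
Lemma Mo_match i : matching adj (Mo i).
Proof. by rewrite /Mo; case: (Z.even i). Qed.

Lemma Q_spec i c d : Q i c = Some d <-> Mt i c d /\ ~ Mo i c d.
Proof. exact: Pm_some (Mt_match i). Qed.

Lemma Q_sym i c d : Q i c = Some d -> Q i d = Some c.
Proof.
rewrite !Q_spec => -[m nm]; split; first exact: (Mt_match i).1.
by move=> /(Mo_match i).1.
Qed.

Lemma Q_D i c d : Q i c = Some d -> D c d.
Proof. by rewrite Q_spec /Mt /Mo /symdiff; case: (Z.even i); tauto. Qed.

Lemma D_sym a b : D a b -> D b a.
Proof.
rewrite /symdiff => -[[m n]|[m n]]; [left|right]; split;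
  try (by apply: HM1.1); try (by apply: HM2.1).
- by move=> /HM2.1.
- by move=> /HM1.1.
Qed.

Lemma D_irr a : ~ D a a.
Proof.
rewrite /symdiff => -[[m _]|[m _]].
- exact: Hsg.2 a (HM1.2.1 _ _ m).
- exact: Hsg.2 a (HM2.2.1 _ _ m).
Qed.

Lemma Q_irr i c : Q i c <> Some c.
Proof. by move=> /Q_D /D_irr. Qed.

Lemma Q_par i j : Z.even i = Z.even j -> Q i = Q j.
Proof. by rewrite /Q /Mt /Mo => ->. Qed.

Fixpoint F (n : nat) : option V :=
  match n with 0 => Some x0 | n'.+1 => obind (Q (Z.of_nat n')) (F n') end.
Fixpoint G (n : nat) : option V :=
  match n with 0 => Some x0 | n'.+1 => obind (Q (- Z.of_nat n' - 1)) (G n') end.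
Definition g (i : Z) : option V :=
  if (0 <=? i)%Z then F (Z.to_nat i) else G (Z.to_nat (- i)).

Lemma g0 : g 0 = Some x0.
Proof. by []. Qed.

Lemma gpos i : (0 <= i)%Z -> g (i + 1) = obind (Q i) (g i).
Proof.
move=> hi; rewrite /g.
have -> : (0 <=? i + 1)%Z = true by lia.
have -> : (0 <=? i)%Z = true by lia.
have -> : Z.to_nat (i + 1) = (Z.to_nat i).+1 by lia.
by rewrite /= Z2Nat.id.
Qed.

Lemma gneg i : (i < 0)%Z -> g i = obind (Q i) (g (i + 1)).
Proof.
move=> hi; rewrite /g.
have -> : (0 <=? i)%Z = false by lia.
have -> : Z.to_nat (- i) = (Z.to_nat (- (i + 1))).+1 by lia.
rewrite /=.
have -> : (- Z.of_nat (Z.to_nat (- (i + 1))) - 1)%Z = i by lia.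
case: (Z.leb_spec 0 (i + 1)) => h //.
have e : (i + 1 = 0)%Z by lia.
by rewrite e.
Qed.

Lemma fwd i c : g i = Some c -> g (i + 1) = Q i c.
Proof.
case: (Z.leb_spec 0 i) => hi.
  by rewrite gpos // => ->.
move=> gi; rewrite gneg // in gi.
case E: (g (i + 1)) gi => [d|] //= /Q_sym.
by move=> h; rewrite h.
Qed.

Lemma bwd i d : g (i + 1) = Some d -> g i = Q i d.
Proof.
case: (Z.leb_spec 0 i) => hi; last by rewrite (gneg hi) => ->.
rewrite gpos //; case: (g i) => [c|] //= /Q_sym.
by move=> h; rewrite h.
Qed.

Definition C y := clos_refl_trans V D x0 y.

Lemma g_C i c : g i = Some c -> C c.
Proof.
suff H : forall n c, (g (Z.of_nat n) = Some c -> C c) /\ (g (- Z.of_nat n) = Some c -> C c).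
  case: (Z.leb_spec 0 i) => hi.
    have -> : i = Z.of_nat (Z.to_nat i) by lia.
    exact: (H _ c).1.
  have -> : i = (- Z.of_nat (Z.to_nat (- i)))%Z by lia.
  exact: (H _ c).2.
elim=> [|n IH] c0.
  by split=> /=; rewrite g0 => -[<-]; apply: rt_refl.
split.
- have -> : Z.of_nat n.+1 = (Z.of_nat n + 1)%Z by lia.
  rewrite gpos; last by lia.
  case E: (g (Z.of_nat n)) => [b|] //= /Q_D Dbc.
  apply: rt_trans (rt_step _ _ _ _ Dbc); exact: (IH b).1.
- rewrite gneg; last by lia.
  have -> : (- Z.of_nat n.+1 + 1 = - Z.of_nat n)%Z by lia.
  case E: (g (- Z.of_nat n)) => [b|] //= /Q_sym /Q_D Dbc.
  apply: rt_trans (rt_step _ _ _ _ (D_sym Dbc)); exact: (IH b).2.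
Qed.

Lemma even_pred1 i : Z.even (i - 1) = ~~ Z.even i.
Proof. by rewrite Z.even_sub; case: (Z.even i). Qed.

Lemma D_Q i z y : D z y -> Q i z = Some y \/ Q (i - 1) z = Some y.
Proof.
rewrite /Q /Mt /Mo even_pred1 /symdiff.
case: (Z.even i) => /= -[h|h]; rewrite ?Pm_some //; tauto.
Qed.

Lemma D_step i z y : g i = Some z -> D z y -> g (i + 1) = Some y \/ g (i - 1) = Some y.
Proof.
move=> gi /(D_Q i) [h|h]; first by left; rewrite (fwd gi).
right; rewrite (bwd (d := z)) //; by rewrite Z.sub_add.
Qed.

Lemma C_g y : C y -> exists i, g i = Some y.
Proof.
move=> H; have := clos_rt_rtn1 _ _ _ _ H; elim=> [|z y' Dz _ [i gi]]; first by exists 0%Z.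
case: (D_step gi Dz) => h; eauto.
Qed.

Lemma edge_char i a b : g i = Some a ->
  (D a b <-> exists j, (g j = Some a /\ g (j + 1) = Some b) \/ (g j = Some b /\ g (j + 1) = Some a)).
Proof.
move=> gi; split.
- move=> /(D_step gi) [h|h].
  + by exists i; left.
  + by exists (i - 1)%Z; right; rewrite Z.sub_add.
- move=> [j [[h1 h2]|[h1 h2]]].
  + by move: h2; rewrite (fwd h1) => /Q_D.
  + by move: h2; rewrite (fwd h1) => /Q_D /D_sym.
Qed.

Lemma edge_type j a b : g j = Some a -> g (j + 1) = Some b ->
  (M1 a b <-> Z.even j) /\ (M2 a b <-> Z.odd j).
Proof.
move=> h1; rewrite (fwd h1) Q_spec /Mt /Mo -Z.negb_even.
case: (Z.even j) => /= -[m n]; (split; split) => // h; exfalso; exact: n h.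
Qed.

Lemma Mt_par i j : Z.even i = Z.even j -> Mt i = Mt j.
Proof. by rewrite /Mt => ->. Qed.

Lemma Mt_cases i : (Mt i = M1 /\ Mt (i - 1) = M2) \/ (Mt i = M2 /\ Mt (i - 1) = M1).
Proof. rewrite /Mt even_pred1; case: (Z.even i); tauto. Qed.

Lemma Mt_max (B : nat -> seq V) i :
  maximum_matching adj B M1 -> maximum_matching adj B M2 -> maximum_matching adj B (Mt i).
Proof. by rewrite /Mt; case: (Z.even i). Qed.

Hypothesis Hx0 : exists y, D x0 y.

Lemma C_edge c : C c -> exists z, D c z.
Proof.
move=> H; have := clos_rt_rtn1 _ _ _ _ H; case=> [|z y' Dz _]; first exact: Hx0.
by exists z; apply: D_sym.
Qed.

Lemma C_noboth c y : C c -> M1 c y -> M2 c y -> False.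
Proof.
move=> /C_edge [z [[m n]|[m n]]] m1 m2.
- by apply: n; rewrite (HM1.2.2 _ _ _ m m1).
- by apply: n; rewrite (HM2.2.2 _ _ _ m m2).
Qed.

Lemma Q_none_miss i c : C c -> (Q i c = None <-> misses (Mt i) c).
Proof.
move=> cc; rewrite /Q Pm_none /misses /Mt /Mo.
case: (Z.even i); split=> h [y hy]; apply: h; exists y; try tauto.
- by split=> // m; apply: C_noboth cc hy m.
- by split=> // m; apply: C_noboth cc m hy.
Qed.

Lemma miss_next i x : g i = Some x -> (misses (Mt i) x <-> g (i + 1) = None).
Proof. by move=> gi; rewrite (fwd gi) (Q_none_miss i (g_C gi)). Qed.

Lemma miss_prev i x : g i = Some x -> (misses (Mt (i - 1)) x <-> g (i - 1) = None).
Proof.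
move=> gi; have gi' : g (i - 1 + 1) = Some x by rewrite Z.sub_add.
by rewrite (bwd gi') (Q_none_miss _ (g_C gi)).
Qed.

Lemma C_closed j x y : C x -> Mt j x y -> C y.
Proof.
move=> cx m; apply: (@rt_trans _ _ _ x); first exact: cx.
apply: rt_step.
move: m; rewrite /Mt /symdiff; case: (Z.even j) => m; [left|right]; split=> //.
- by move=> m'; apply: C_noboth cx m m'.
- by move=> m'; apply: C_noboth cx m' m.
Qed.

Lemma even_add1 i : Z.even (i + 1) = ~~ Z.even i.
Proof. by rewrite Z.even_add; case: (Z.even i). Qed.
Lemma even_sub1 i : Z.even (i - 1) = ~~ Z.even i.
Proof. exact: even_pred1. Qed.

Lemma pos_none i : (0 <= i)%Z -> g i = None -> g (i + 1) = None.
Proof. by move=> hi gi; rewrite gpos // gi. Qed.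

Lemma neg_none i : (i <= 0)%Z -> g i = None -> g (i - 1) = None.
Proof.
move=> hi gi; rewrite gneg; last by lia.
by rewrite Z.sub_add gi.
Qed.

Lemma pos_none_n i : (0 <= i)%Z -> g i = None -> forall n : nat, g (i + Z.of_nat n) = None.
Proof.
move=> hi gi; elim=> [|n IH]; first by rewrite Z.add_0_r.
have -> : (i + Z.of_nat n.+1 = i + Z.of_nat n + 1)%Z by lia.
apply: pos_none => //; lia.
Qed.

Lemma neg_none_n i : (i <= 0)%Z -> g i = None -> forall n : nat, g (i - Z.of_nat n) = None.
Proof.
move=> hi gi; elim=> [|n IH]; first by rewrite Z.sub_0_r.
have -> : (i - Z.of_nat n.+1 = i - Z.of_nat n - 1)%Z by lia.
apply: neg_none => //; lia.
Qed.

Lemma interval a b k : g a <> None -> g b <> None -> (a <= k <= b)%Z -> g k <> None.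
Proof.
move=> ga gb hk gk.
case: (Z.leb_spec 0 k) => h.
  apply: gb; have := pos_none_n h gk (Z.to_nat (b - k)).
  by have -> : (k + Z.of_nat (Z.to_nat (b - k)) = b)%Z by lia.
apply: ga; have := neg_none_n (Z.lt_le_incl _ _ h) gk (Z.to_nat (k - a)).
by have -> : (k - Z.of_nat (Z.to_nat (k - a)) = a)%Z by lia.
Qed.

Lemma g0n : g 0 <> None.
Proof. by rewrite g0. Qed.

Lemma shift i j c : g i = Some c -> g j = Some c -> Z.even i = Z.even j ->
  forall t, g (i + t) = g (j + t).
Proof.
move=> gi gj ev.
have gin : g i <> None by rewrite gi.
have gjn : g j <> None by rewrite gj.
have P : forall n : nat, g (i + Z.of_nat n) = g (j + Z.of_nat n).
  elim=> [|n IH]; first by rewrite !Z.add_0_r gi gj.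
  have -> : (i + Z.of_nat n.+1 = (i + Z.of_nat n) + 1)%Z by lia.
  have -> : (j + Z.of_nat n.+1 = (j + Z.of_nat n) + 1)%Z by lia.
  case E: (g (i + Z.of_nat n)) IH => [e|] IH.
    rewrite (fwd E) (fwd (esym IH)); congr (_ e); apply: Q_par.
    by rewrite !Z.even_add ev.
  have hi : (0 < i + Z.of_nat n)%Z.
    case: (Z.ltb_spec 0 (i + Z.of_nat n)) => // h0.
    by case: (interval gin g0n (k := (i + Z.of_nat n)%Z)); [lia|].
  have hj : (0 < j + Z.of_nat n)%Z.
    case: (Z.ltb_spec 0 (j + Z.of_nat n)) => // h0.
    by case: (interval gjn g0n (k := (j + Z.of_nat n)%Z)); [lia|rewrite -IH].
  rewrite !pos_none //; lia.
have N : forall n : nat, g (i - Z.of_nat n) = g (j - Z.of_nat n).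
  elim=> [|n IH]; first by rewrite !Z.sub_0_r gi gj.
  have -> : (i - Z.of_nat n.+1 = (i - Z.of_nat n) - 1)%Z by lia.
  have -> : (j - Z.of_nat n.+1 = (j - Z.of_nat n) - 1)%Z by lia.
  case E: (g (i - Z.of_nat n)) IH => [e|] IH.
    have E1 : g (i - Z.of_nat n - 1 + 1) = Some e by rewrite Z.sub_add.
    have E2 : g (j - Z.of_nat n - 1 + 1) = Some e by rewrite Z.sub_add -IH.
    rewrite (bwd E1) (bwd E2); congr (_ e); apply: Q_par.
    by rewrite !Z.even_sub ev.
  have hi : (i - Z.of_nat n < 0)%Z.
    case: (Z.ltb_spec (i - Z.of_nat n) 0) => // h0.
    by case: (interval g0n gin (k := (i - Z.of_nat n)%Z)); [lia|].
  have hj : (j - Z.of_nat n < 0)%Z.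
    case: (Z.ltb_spec (j - Z.of_nat n) 0) => // h0.
    by case: (interval g0n gjn (k := (j - Z.of_nat n)%Z)); [lia|rewrite -IH].
  rewrite !neg_none //; lia.
move=> t; case: (Z.leb_spec 0 t) => ht.
  have -> : t = Z.of_nat (Z.to_nat t) by lia.
  exact: P.
have -> : t = (- Z.of_nat (Z.to_nat (- t)))%Z by lia.
by rewrite -!Z.sub_opp_r !Z.opp_involutive N.
Qed.

Lemma odd_diff i j c : g i = Some c -> g j = Some c -> Z.even i <> Z.even j -> False.
Proof.
suff H : forall N : nat, forall i j c, (0 < j - i <= Z.of_nat N)%Z ->
    g i = Some c -> g j = Some c -> Z.even i <> Z.even j -> False.
  move=> gi gj ev.
  case: (Z.lt_total i j) => [h|[h|h]].
  - by apply: (H (Z.to_nat (j - i)) i j c) => //; lia.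
  - by apply: ev; rewrite h.
  - apply: (H (Z.to_nat (i - j)) j i c) => //; first by lia.
    by move=> e; apply: ev; rewrite e.
elim=> [|N IH] {}i {}j {}c hN gi gj ev; first by lia.
case: (Z.eq_dec (j - i) 1) => h1.
  have e : j = (i + 1)%Z by lia.
  by move: gj; rewrite e (fwd gi); apply: Q_irr.
case: (Z.eq_dec (j - i) 2) => h2.
  have e : j = (i + 1 + 1)%Z by lia.
  by apply: ev; rewrite e !even_add1 negbK.
have gin : g i <> None by rewrite gi.
have gjn : g j <> None by rewrite gj.
have hn : g (i + 1) <> None by apply: (interval gin gjn); lia.
rewrite (fwd gi) in hn.
case E: (Q i c) hn => [e|] // _.
have gj' : g (j - 1 + 1) = Some c by rewrite Z.sub_add.
have e2 : g (j - 1) = Some e.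
  by rewrite (bwd gj') -E; congr (_ c); apply: Q_par; rewrite even_sub1; case: (Z.even i) (Z.even j) ev => -[].
have e1 : g (i + 1) = Some e by rewrite (fwd gi).
apply: (IH (i + 1)%Z (j - 1)%Z e) => //; first by lia.
by rewrite even_add1 even_sub1; case: (Z.even i) (Z.even j) ev => -[].
Qed.

Lemma nocov_next i j x : g i = Some x -> Z.even j = Z.even i -> g (i + 1) <> None ->
  ~ misses (Mt j) x.
Proof. by move=> gi e h; rewrite (Mt_par e) (miss_next gi). Qed.

Lemma nocov_prev i j x : g i = Some x -> Z.even j <> Z.even i -> g (i - 1) <> None ->
  ~ misses (Mt j) x.
Proof.
move=> gi e h; have e' : Z.even j = Z.even (i - 1).
  by rewrite even_sub1; case: (Z.even j) (Z.even i) e => -[].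
by rewrite (Mt_par e') (miss_prev gi).
Qed.

Lemma interior i j x : g i = Some x -> g (i - 1) <> None -> g (i + 1) <> None ->
  ~ misses (Mt j) x.
Proof.
move=> gi h1 h2; case: (boolP (Z.even j == Z.even i)) => [/eqP e|/eqP e].
- exact: nocov_next gi e h2.
- exact: nocov_prev gi e h1.
Qed.

Variable B : nat -> seq V.
Hypothesis Hdag : dagger adj B.
Hypothesis HMM1 : maximum_matching adj B M1.
Hypothesis HMM2 : maximum_matching adj B M2.

Lemma getg i : g i <> None -> exists x, g i = Some x.
Proof. by case: (g i) => [x|] //; exists x. Qed.

Section NoCycle.
Hypothesis NoCyc : forall n : nat, (0 < n)%N -> g (Z.of_nat n) <> Some x0.

Lemma g_inj i j c : g i = Some c -> g j = Some c -> i = j.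
Proof.
suff H : forall i j c, (i < j)%Z -> g i = Some c -> g j = Some c -> False.
  move=> gi gj; case: (Z.lt_total i j) => [h|[h|h]] //.
  - by case: (H _ _ _ h gi gj).
  - by case: (H _ _ _ h gj gi).
move=> {}i {}j {}c h gi gj.
case: (boolP (Z.even i == Z.even j)) => [/eqP ev|ev]; last first.
  by apply: (odd_diff gi gj) => e; rewrite e eqxx in ev.
have := shift gi gj ev (- i).
rewrite Z.add_opp_diag_r g0 => e.
apply: (NoCyc (n := Z.to_nat (j - i))); first by lia.
by rewrite e; congr g; lia.
Qed.

Lemma ray_plus (m : nat) : (forall i, g i <> None <-> (- Z.of_nat m <= i)%Z) -> False.
Proof.
move=> Dom.
have [u gu] := getg (proj2 (Dom (- Z.of_nat m)%Z) (Z.le_refl _)).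
apply: (improve1 Hdag (C := C) (Ma := Mt (- Z.of_nat m - 1)) (Mb := Mt (- Z.of_nat m)) (u := u)).
- exact: Mt_max.
- exact: Mt_match.
- by move=> x y; apply: C_closed.
- by move=> x y; apply: C_closed.
- move=> x /C_g [i gi].
  have hi := proj1 (Dom i) ltac:(by rewrite gi).
  case: (boolP (Z.even (- Z.of_nat m) == Z.even i)) => [/eqP e|/eqP e].
  + by apply: (nocov_next gi e); apply/Dom; lia.
  + apply: (nocov_prev gi e); apply/Dom.
    case: (Z.eq_dec i (- Z.of_nat m)) => h; last by lia.
    by case: e; rewrite h.
- exact: g_C gu.
- apply/(miss_prev gu); case E: (g _) => [z|] //.
  have := proj1 (Dom (- Z.of_nat m - 1)%Z) ltac:(by rewrite E); lia.
Qed.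

Lemma ray_minus (k : nat) : (forall i, g i <> None <-> (i <= Z.of_nat k)%Z) -> False.
Proof.
move=> Dom.
have [u gu] := getg (proj2 (Dom (Z.of_nat k)%Z) (Z.le_refl _)).
apply: (improve1 Hdag (C := C) (Ma := Mt (Z.of_nat k)) (Mb := Mt (Z.of_nat k - 1)) (u := u)).
- exact: Mt_max.
- exact: Mt_match.
- by move=> x y; apply: C_closed.
- by move=> x y; apply: C_closed.
- move=> x /C_g [i gi].
  have hi := proj1 (Dom i) ltac:(by rewrite gi).
  case: (boolP (Z.even (Z.of_nat k - 1) == Z.even i)) => [/eqP e|/eqP e].
  + apply: (nocov_next gi e); apply/Dom.
    case: (Z.eq_dec i (Z.of_nat k)) => h; last by lia.
    by move: e; rewrite h even_sub1; case: (Z.even _).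
  + by apply: (nocov_prev gi e); apply/Dom; lia.
- exact: g_C gu.
- apply/(miss_next gu); case E: (g _) => [z|] //.
  have := proj1 (Dom (Z.of_nat k + 1)%Z) ltac:(by rewrite E); lia.
Qed.

Lemma dray_case : (forall i, g i <> None) -> alt_double_ray M1 M2 D C.
Proof.
move=> Dom.
pose f i := odflt x0 (g i).
have gf : forall i, g i = Some (f i).
  by move=> i; rewrite /f; case E: (g i) (Dom i) => [z|].
exists f; split; last split; last split.
- by move=> i j e; apply: (g_inj (gf i)); rewrite e gf.
- move=> y; split; first by move=> /C_g [i gi]; exists i; move: (gf i); rewrite gi => -[].
  by move=> [i <-]; apply: g_C (gf i).
- move=> a b /C_g [i gi]; rewrite (edge_char b gi); split.
  + move=> [j [[h1 h2]|[h1 h2]]]; exists j; [left|right];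
      by move: h1 h2; rewrite -Z.add_1_r !gf => -[->] [->].
  + move=> [j [[-> ->]|[-> ->]]]; exists j; [left|right]; by rewrite Z.add_1_r !gf.
- exists false => i.
  have := edge_type (gf i) (gf (i + 1)%Z); rewrite Z.add_1_r -Z.negb_even.
  case: (Z.even i) => /= -[h1 h2]; split; split; move=> /=; try tauto.
  all: try (by move=> /h1); try (by move=> /h2); try (by move=> _; apply/h1); try (by move=> _; apply/h2); try by [].
Qed.

Lemma path_case (k m : nat) :
  (forall i, g i <> None <-> (- Z.of_nat m <= i <= Z.of_nat k)%Z) ->
  alt_even_path B M1 M2 D C.
Proof.
move=> Dom.
have [u gu] := getg (proj2 (Dom (- Z.of_nat m)%Z) ltac:(lia)).
have [w gw] := getg (proj2 (Dom (Z.of_nat k)) ltac:(lia)).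
have gmm : g (- Z.of_nat m - 1)%Z = None.
  by case E: (g _) => [z|] //; have := proj1 (Dom (- Z.of_nat m - 1)%Z) ltac:(by rewrite E); lia.
have gkk : g (Z.of_nat k + 1)%Z = None.
  by case E: (g _) => [z|] //; have := proj1 (Dom (Z.of_nat k + 1)%Z) ltac:(by rewrite E); lia.
have [q hq] := nat_par (k + m).
have evkm : ~~ odd (k + m).
  apply/negP => oddkm.
  apply: (improve1 Hdag (C := C) (Ma := Mt (- Z.of_nat m - 1)) (Mb := Mt (- Z.of_nat m)) (u := u)).
  - exact: Mt_max.
  - exact: Mt_match.
  - by move=> x y; apply: C_closed.
  - by move=> x y; apply: C_closed.
  - move=> x /C_g [i gi].
    have hi := proj1 (Dom i) ltac:(by rewrite gi).
    case: (boolP (Z.even (- Z.of_nat m) == Z.even i)) => [/eqP e|/eqP e].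
    + apply: (nocov_next gi e); apply/Dom.
      case: (Z.eq_dec i (Z.of_nat k)) => h; last by lia.
      exfalso; have [q' hq'] := par_eq e; rewrite oddkm /= in hq; lia.
    + apply: (nocov_prev gi e); apply/Dom.
      case: (Z.eq_dec i (- Z.of_nat m)) => h; last by lia.
      by case: e; rewrite h.
  - exact: g_C gu.
  - by apply/(miss_prev gu).
pose F' j := odflt x0 (g (Z.of_nat j - Z.of_nat m)%Z).
pose s := [seq F' j | j <- iota 0 (k + m + 1)].
have sz : size s = k + m + 1 by rewrite size_map size_iota.
have gF : forall j, j < k + m + 1 -> g (Z.of_nat j - Z.of_nat m)%Z = Some (F' j).
  move=> j hj; rewrite /F'; case E: (g _) => [z|] //=.
  by exfalso; apply: (proj2 (Dom _) _ E); lia.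
have nthF : forall j, j < k + m + 1 -> nth x0 s j = F' j.
  by move=> j hj; rewrite (nth_map 0) ?size_iota // nth_iota.
have Fz : forall z, (- Z.of_nat m <= z)%Z -> F' (Z.to_nat (z + Z.of_nat m)) = odflt x0 (g z).
  by move=> z hz; rewrite /F'; congr (odflt x0 (g _)); lia.
have Fz1 : forall z, (- Z.of_nat m <= z)%Z ->
    F' (Z.to_nat (z + Z.of_nat m)).+1 = odflt x0 (g (z + 1)%Z).
  by move=> z hz; rewrite /F'; congr (odflt x0 (g _)); lia.
exists s, x0; cbv zeta; rewrite sz.
split; [|split; [|split; [|split; [|split]]]].
- rewrite map_inj_in_uniq ?iota_uniq // => a b; rewrite !mem_iota => ha hb e.
  have ga := gF a ltac:(lia); have gb := gF b ltac:(lia).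
  rewrite e in ga; have := g_inj ga gb; lia.
- by rewrite addn1 /= evkm.
- move=> y; split.
  + move=> /C_g [i gi]; have hi := proj1 (Dom i) ltac:(by rewrite gi).
    apply/mapP; exists (Z.to_nat (i + Z.of_nat m)); first by rewrite mem_iota; lia.
    by rewrite Fz ?gi //; lia.
  + move=> /mapP [j hj ->]; rewrite mem_iota in hj; apply: (g_C (gF j _)); lia.
- move=> a b /C_g [i gi]; rewrite (edge_char b gi); split.
  + move=> [z [[h1 h2]|[h1 h2]]].
    * have hz := proj1 (Dom z) ltac:(by rewrite h1).
      have hz1 := proj1 (Dom (z + 1)%Z) ltac:(by rewrite h2).
      exists (Z.to_nat (z + Z.of_nat m)); first by lia.
      left; rewrite !nthF; try lia.
      by rewrite Fz ?Fz1 ?h1 ?h2; try lia.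
    * have hz := proj1 (Dom z) ltac:(by rewrite h1).
      have hz1 := proj1 (Dom (z + 1)%Z) ltac:(by rewrite h2).
      exists (Z.to_nat (z + Z.of_nat m)); first by lia.
      right; rewrite !nthF; try lia.
      by rewrite Fz ?Fz1 ?h1 ?h2; try lia.
  + move=> [j hj H].
    have g0' := gF j ltac:(lia).
    have g1' : g (Z.of_nat j - Z.of_nat m + 1)%Z = Some (F' j.+1).
      rewrite (_ : (Z.of_nat j - Z.of_nat m + 1 = Z.of_nat j.+1 - Z.of_nat m)%Z); last by lia.
      by apply: gF; lia.
    exists (Z.of_nat j - Z.of_nat m)%Z; rewrite !nthF in H; try lia.
    by case: H => [[-> ->]|[-> ->]]; [left|right].
- exists (odd m) => j hj; rewrite !nthF; try lia.
  have g1 : g (Z.of_nat j - Z.of_nat m + 1)%Z = Some (F' j.+1).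
    rewrite (_ : (Z.of_nat j - Z.of_nat m + 1 = Z.of_nat j.+1 - Z.of_nat m)%Z); last by lia.
    by apply: gF; lia.
  have := edge_type (gF j ltac:(lia)) g1.
  rewrite -Z.negb_even Z.even_sub !Zeven_nat.
  case: (odd j); case: (odd m) => /= -[h1 h2]; split; split; move=> /=; try tauto.
  all: try (by move=> /h1); try (by move=> /h2); try (by move=> _; apply/h1); try (by move=> _; apply/h2); try by [].
- have Fu : F' 0 = u by rewrite /F' Z.sub_0_l gu.
  have Fw : F' (k + m) = w.
    by rewrite /F' (_ : (Z.of_nat (k + m) - Z.of_nat m = Z.of_nat k)%Z) ?gw //; lia.
  rewrite !nthF ?addn1 //= ?Fu ?Fw; try lia.
  have noUW : forall N, u \in B N -> w \notin B N -> False.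
    move=> N uN wN.
    have uw : u <> w by move=> e; rewrite -e uN in wN.
    have km0 : (- Z.of_nat m < Z.of_nat k)%Z.
      case: (Z.eq_dec (- Z.of_nat m) (Z.of_nat k)) => h; last by lia.
      by case: uw; move: gu; rewrite h gw => -[].
    apply: (improve2 Hdag (C := C) (Ma := Mt (- Z.of_nat m - 1)) (Mb := Mt (- Z.of_nat m)) (u := u) (w := w) (n0 := N)) => //.
    + exact: Mt_max.
    + exact: Mt_match.
    + by move=> x y; apply: C_closed.
    + by move=> x y; apply: C_closed.
    + move=> x /C_g [i gi] xu xw.
      have hi := proj1 (Dom i) ltac:(by rewrite gi).
      have ne1 : i <> (- Z.of_nat m)%Z by move=> e; apply: xu; move: gi; rewrite e gu => -[].
      have ne2 : i <> Z.of_nat k by move=> e; apply: xw; move: gi; rewrite e gw => -[].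
      by split; apply: (interior gi); apply/Dom; lia.
    + exact: g_C gu.
    + by apply/(miss_prev gu).
    + by apply: (nocov_next gu) => //; apply/Dom; lia.
  have noWU : forall N, w \in B N -> u \notin B N -> False.
    move=> N wN uN.
    have uw : u <> w by move=> e; rewrite e wN in uN.
    have km0 : (- Z.of_nat m < Z.of_nat k)%Z.
      case: (Z.eq_dec (- Z.of_nat m) (Z.of_nat k)) => h; last by lia.
      by case: uw; move: gu; rewrite h gw => -[].
    apply: (improve2 Hdag (C := C) (Ma := Mt (Z.of_nat k)) (Mb := Mt (Z.of_nat k - 1)) (u := w) (w := u) (n0 := N)) => //.
    + exact: Mt_max.
    + exact: Mt_match.
    + by move=> x y; apply: C_closed.
    + by move=> x y; apply: C_closed.
    + move=> x /C_g [i gi] xw xu.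
      have hi := proj1 (Dom i) ltac:(by rewrite gi).
      have ne1 : i <> (- Z.of_nat m)%Z by move=> e; apply: xu; move: gi; rewrite e gu => -[].
      have ne2 : i <> Z.of_nat k by move=> e; apply: xw; move: gi; rewrite e gw => -[].
      by split; apply: (interior gi); apply/Dom; lia.
    + exact: g_C gw.
    + by apply/(miss_next gw).
    + apply: (nocov_prev gw); first by rewrite even_sub1; case: (Z.even _).
      by apply/Dom; lia.
  have ex : exists n, u \in B n := Hdag.2.1 u.
  case: (ex_minnP ex) => k0 uk0 mink0.
  exists k0; split; split.
  + exact: uk0.
  + by move=> j e; apply/negP => uj; have := mink0 _ uj; lia.
  + by case: (boolP (w \in B k0)) => // wn; case: (noUW _ uk0 wn).
  + move=> j e; apply/negP => wj; case: (boolP (u \in B j)) => uj.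
    * by have := mink0 _ uj; lia.
    * exact: noWU wj uj.
Qed.

End NoCycle.

Lemma cycle_case (n : nat) : (0 < n)%N -> g (Z.of_nat n) = Some x0 ->
  (forall p : nat, (0 < p)%N -> g (Z.of_nat p) = Some x0 -> n <= p) ->
  alt_even_cycle M1 M2 D C.
Proof.
move=> n0 gn minn.
have ev : Z.even (Z.of_nat n) = Z.even 0.
  case: (boolP (Z.even (Z.of_nat n) == Z.even 0)) => [/eqP //|/eqP e].
  by exfalso; apply: (odd_diff g0 gn) => e'; apply: e; rewrite e'.
have per : forall t, g t = g (Z.of_nat n + t).
  by move=> t; have := shift g0 gn (esym ev) t; rewrite Z.add_0_l.
have perN : forall (q : nat) t, g (t + Z.of_nat q * Z.of_nat n)%Z = g t.
  elim=> [|q IH] t; first by rewrite Z.mul_0_l Z.add_0_r.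
  rewrite (_ : (t + Z.of_nat q.+1 * Z.of_nat n = Z.of_nat n + (t + Z.of_nat q * Z.of_nat n))%Z).
    by rewrite -per IH.
  rewrite Nat2Z.inj_succ; ring.
have perZ : forall Q t, g (t + Q * Z.of_nat n)%Z = g t.
  move=> Q t; case: (Z.leb_spec 0 Q) => hQ.
    by rewrite -(Z2Nat.id Q hQ) perN.
  rewrite -(perN (Z.to_nat (- Q)) (t + Q * Z.of_nat n)%Z).
  congr g; rewrite Z2Nat.id; [ring|lia].
have nZ : (0 < Z.of_nat n)%Z by lia.
have red : forall z, g z = g (z mod Z.of_nat n)%Z.
  move=> z; rewrite -(perZ (z / Z.of_nat n)%Z (z mod Z.of_nat n)%Z).
  congr g; rewrite {1}(Z_div_mod_eq_full z (Z.of_nat n)); ring.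
have modb : forall z, (0 <= z mod Z.of_nat n < Z.of_nat n)%Z.
  by move=> z; apply: Z.mod_pos_bound.
have gnn : g (Z.of_nat n) <> None by rewrite gn.
have gdef : forall j : nat, j < n -> g (Z.of_nat j) <> None.
  by move=> j hj; apply: (interval g0n gnn); lia.
pose f j := odflt x0 (g (Z.of_nat j)).
have gf : forall j, j < n -> g (Z.of_nat j) = Some (f j).
  by move=> j hj; rewrite /f; case E: (g _) (gdef j hj).
pose s := [seq f j | j <- iota 0 n].
have sz : size s = n by rewrite size_map size_iota.
have nthf : forall j, j < n -> nth x0 s j = f j.
  by move=> j hj; rewrite (nth_map 0) ?size_iota // nth_iota.
have f0 : f 0 = x0 by rewrite /f g0.
have gnext : forall i, i < n -> g (Z.of_nat i + 1)%Z = Some (nth x0 s (i.+1 %% n)).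
  move=> i hi; case: (ltngtP i.+1 n) => h.
  - rewrite modn_small // nthf // -gf //; congr g; lia.
  - lia.
  - rewrite -h modnn nthf // f0.
    by rewrite (_ : (Z.of_nat i + 1 = Z.of_nat n)%Z) ?gn //; lia.
have dist : forall a b c, a < b -> b < n -> g (Z.of_nat a) = Some c ->
    g (Z.of_nat b) = Some c -> False.
  move=> a b c ab bn ga gb.
  case: (boolP (Z.even (Z.of_nat a) == Z.even (Z.of_nat b))) => [/eqP e|/eqP e];
    last exact: odd_diff ga gb e.
  have := shift ga gb e (- Z.of_nat a); rewrite Z.add_opp_diag_r g0 => h.
  have := minn (b - a) ltac:(lia).
  rewrite (_ : Z.of_nat (b - a) = (Z.of_nat b + - Z.of_nat a)%Z); last by lia.
  by rewrite -h => /(_ erefl); lia.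
exists s, x0; cbv zeta; rewrite sz.
split; [|split; [|split; [|split; [|split]]]].
- rewrite map_inj_in_uniq ?iota_uniq // => a b; rewrite !mem_iota => ha hb e.
  have ga := gf a ltac:(lia); have gb := gf b ltac:(lia).
  rewrite e in ga.
  case: (ltngtP a b) => // h; exfalso.
  + exact: dist h _ ga gb.
  + exact: dist h _ gb ga.
- have [q hq] := par_eq ev.
  case: (eqVneq n 2) => [n2|n2]; last by lia.
  have g1 := gf 1 ltac:(lia).
  have g2 : g (1 + 1)%Z = Some x0 by rewrite -gn n2.
  have [_ e1] := edge_type g1 g2.
  have [_ e0] := edge_type (j := 0%Z) g0 g1.
  have : M2 x0 (f 1) by apply: HM2.1; apply/e1.
  by move/e0.
- by move: ev; rewrite Zeven_nat.
- move=> y; split.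
  + move=> /C_g [z gz]; rewrite red in gz.
    apply/mapP; exists (Z.to_nat (z mod Z.of_nat n)%Z).
      by rewrite mem_iota; have := modb z; lia.
    by rewrite /f Z2Nat.id ?gz //; have := modb z; lia.
  + move=> /mapP [j hj ->]; rewrite mem_iota in hj; apply: (g_C (gf j _)); lia.
- move=> a b /C_g [i gi]; rewrite (edge_char b gi); split.
  + have key : forall z, exists2 j, j < n & g z = g (Z.of_nat j) /\ g (z + 1)%Z = g (Z.of_nat j + 1)%Z.
      move=> z; exists (Z.to_nat (z mod Z.of_nat n)%Z); first by have := modb z; lia.
      rewrite Z2Nat.id; last by have := modb z; lia.
      split; first exact: red.
      rewrite -(perZ (z / Z.of_nat n)%Z (z mod Z.of_nat n + 1)%Z).
      congr g; rewrite {1}(Z_div_mod_eq_full z (Z.of_nat n)); ring.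
    move=> [z [[h1 h2]|[h1 h2]]]; have [j hj [e1 e2]] := key z;
      rewrite e1 in h1; rewrite e2 in h2; exists j => //.
    * left; move: h1 h2; rewrite (gf j hj) (gnext j hj) => -[<-] [<-].
      by rewrite (nthf j hj).
    * right; move: h1 h2; rewrite (gf j hj) (gnext j hj) => -[<-] [<-].
      by rewrite (nthf j hj).
  + move=> [j hj [H|H]]; case: H => -> ->; exists (Z.of_nat j); [left|right];
      by rewrite (gnext j hj) (nthf j hj) (gf j hj).
- exists false => j hj /=.
  have := edge_type (gf j hj) (gnext j hj).
  rewrite (nthf j hj) -Z.negb_even Zeven_nat.
  case: (odd j) => /= -[h1 h2]; split; split; move=> /=; try tauto.
  all: try (by move=> /h1); try (by move=> /h2); try (by move=> _; apply/h1); try (by move=> _; apply/h2); try by [].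
Qed.

Lemma main : alt_even_cycle M1 M2 D C \/ alt_double_ray M1 M2 D C \/ alt_even_path B M1 M2 D C.
Proof.
case: (classic (exists n : nat, (0 < n)%N /\ g (Z.of_nat n) = Some x0)) => [ex|nex].
  left.
  have ex' : exists n, (0 < n) && decb (g (Z.of_nat n) = Some x0).
    by case: ex => n [h1 h2]; exists n; rewrite h1; apply/decbE.
  case: (ex_minnP ex') => n /andP [n0 /decbE gn] minn.
  apply: (cycle_case n0 gn) => p p0 gp; apply: minn; rewrite p0; exact/decbE.
have NoCyc : forall n : nat, (0 < n)%N -> g (Z.of_nat n) <> Some x0.
  by move=> n h1 h2; apply: nex; exists n.
have posS : (exists k : nat, forall i, (0 <= i)%Z -> (g i <> None <-> (i <= Z.of_nat k)%Z))
    \/ (forall i, (0 <= i)%Z -> g i <> None).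
  case: (classic (exists p : nat, g (Z.of_nat p + 1)%Z = None)) => [ex|nex']; [left|right].
  - have ex' : exists p, decb (g (Z.of_nat p + 1)%Z = None).
      by case: ex => p h; exists p; apply/decbE.
    case: (ex_minnP ex') => k /decbE gk mink.
    exists k => i hi; split.
    + move=> gi; case: (Z.leb_spec i (Z.of_nat k)) => // h; exfalso; apply: gi.
      have := pos_none_n (i := (Z.of_nat k + 1)%Z) ltac:(lia) gk (Z.to_nat (i - Z.of_nat k - 1)).
      by rewrite (_ : (Z.of_nat k + 1 + Z.of_nat (Z.to_nat (i - Z.of_nat k - 1)) = i)%Z); last lia.
    + move=> hik gi; case: (Z.eq_dec i 0) => [e|ne]; first by move: gi; rewrite e g0.
      have : decb (g (Z.of_nat (Z.to_nat (i - 1)) + 1)%Z = None).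
        by apply/decbE; rewrite (_ : (Z.of_nat (Z.to_nat (i - 1)) + 1 = i)%Z) //; lia.
      by move=> /mink; lia.
  - move=> i hi gi; case: (Z.eq_dec i 0) => [e|ne]; first by move: gi; rewrite e g0.
    by apply: nex'; exists (Z.to_nat (i - 1)); rewrite (_ : (Z.of_nat (Z.to_nat (i - 1)) + 1 = i)%Z) //; lia.
have negS : (exists m : nat, forall i, (i <= 0)%Z -> (g i <> None <-> (- Z.of_nat m <= i)%Z))
    \/ (forall i, (i <= 0)%Z -> g i <> None).
  case: (classic (exists p : nat, g (- Z.of_nat p - 1)%Z = None)) => [ex|nex']; [left|right].
  - have ex' : exists p, decb (g (- Z.of_nat p - 1)%Z = None).
      by case: ex => p h; exists p; apply/decbE.
    case: (ex_minnP ex') => k /decbE gk mink.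
    exists k => i hi; split.
    + move=> gi; case: (Z.leb_spec (- Z.of_nat k) i) => // h; exfalso; apply: gi.
      have := neg_none_n (i := (- Z.of_nat k - 1)%Z) ltac:(lia) gk (Z.to_nat (- Z.of_nat k - 1 - i)).
      by rewrite (_ : (- Z.of_nat k - 1 - Z.of_nat (Z.to_nat (- Z.of_nat k - 1 - i)) = i)%Z); last lia.
    + move=> hik gi; case: (Z.eq_dec i 0) => [e|ne]; first by move: gi; rewrite e g0.
      have : decb (g (- Z.of_nat (Z.to_nat (- i - 1)) - 1)%Z = None).
        by apply/decbE; rewrite (_ : (- Z.of_nat (Z.to_nat (- i - 1)) - 1 = i)%Z) //; lia.
      by move=> /mink; lia.
  - move=> i hi gi; case: (Z.eq_dec i 0) => [e|ne]; first by move: gi; rewrite e g0.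
    by apply: nex'; exists (Z.to_nat (- i - 1)); rewrite (_ : (- Z.of_nat (Z.to_nat (- i - 1)) - 1 = i)%Z) //; lia.
case: posS => [[k Hk]|Hp]; case: negS => [[m Hm]|Hn].
- right; right; apply: (path_case NoCyc (k := k) (m := m)) => i.
  case: (Z.leb_spec 0 i) => hi.
  + by split => [/(Hk i hi)|h]; [lia|apply/(Hk i hi); lia].
  + by split => [/(Hm i ltac:(lia))|h]; [lia|apply/(Hm i ltac:(lia)); lia].
- exfalso; apply: (ray_minus (k := k)) => i.
  case: (Z.leb_spec 0 i) => hi.
  + exact: Hk.
  + by split => [_|_]; [lia|apply: Hn; lia].
- exfalso; apply: (ray_plus (m := m)) => i.
  case: (Z.leb_spec 0 i) => hi.
  + by split => [_|_]; [lia|apply: Hp].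
  + by apply: Hm; lia.
- right; left; apply: (dray_case NoCyc) => i.
  case: (Z.leb_spec 0 i) => hi; [exact: Hp | apply: Hn; lia].
Qed.
End Walk.

Theorem lemmaA2 (V : countType) (adj : V -> V -> Prop) (B : nat -> seq V)
    (M1 M2 : V -> V -> Prop) :
  simple_graph adj -> countably_infinite V -> connected_graph adj ->
  dagger adj B ->
  maximum_matching adj B M1 -> maximum_matching adj B M2 ->
  forall x0 : V, (exists y, symdiff M1 M2 x0 y) ->
  let C := fun y => clos_refl_trans V (symdiff M1 M2) x0 y in
  alt_even_cycle M1 M2 (symdiff M1 M2) C \/
  alt_double_ray M1 M2 (symdiff M1 M2) C \/
  alt_even_path B M1 M2 (symdiff M1 M2) C.
Proof.
move=> Hsg _ _ Hdag HMM1 HMM2 x0 Hx0 C.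
exact: (main Hsg HMM1.1 HMM2.1 Hx0 Hdag HMM1 HMM2).
Qed.
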